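(* Let $n\ge5$. There is a reciprocal recommendation task with $n$ users such that, for every $\alpha<1$ and every maximizer $u^\alpha$ of $W_\alpha$ over $\mathcal U$, and for every choice of $u^{\mathrm{eq},\beta}\in\mathcal U^{\mathrm{eq}}_\beta$ ($\beta>0$): (i) there exists $\beta>0$ such that $u^\alpha_i>u^{\mathrm{eq},\beta}_i$ for all $i\in[n]$; (ii) $\lim_{\beta\to\infty}\sum_{i=1}^n u^{\mathrm{eq},\beta}_i=0$.
   Context: Reciprocal recommendation task: $n$ users $[n]$ who are also the items, a symmetric matrix of mutual preference values $\mu_{ij}=\mu_{ji}\ge0$ ($i\neq j$), and exposure weights $v\in\mathbb R^{n-1}$ with $v_1\ge\dots\ge v_{n-1}\ge0$. Each user $i$ receives a stochastic ranking of the other users: a ranking tensor is $P=(P_{ijk})$, $i\in[n]$, $j\in[n]\setminus\{i\}$, $k\in[n-1]$, such that each $(P_{ijk})_{j,k}$ is doubly stochastic; $\mathcal P$ is the set of ranking tensors; $P_{ij}v=\sum_kP_{ijk}v_k$. The (two-sided) utility of user $i$ is $u_i(P)=\sum_{j\ne i}\mu_{ij}P_{ij}v+\sum_{j\neq i}\mu_{ij}P_{ji}v$; $\mathcal U=\{(u_i(P))_{i\in[n]}:P\in\mathcal P\}$. Welfare: $\psi(x,\alpha)=x^\alpha$ ($\alpha>0$), $\log x$ ($\alpha=0$), $-x^\alpha$ ($\alpha<0$), with $\psi(0,\alpha)=-\infty$ for $\alpha\le0$; $W_\alpha(u)=\sum_{i=1}^n\psi(u_i,\alpha)$. Equality of utility: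 $D(u)=\frac1n\sum_{j=1}^n\big(u_j-\frac1n\sum_{j'=1}^nu_{j'}\big)^2$, $F^{\mathrm{eq}}_\beta(u)=\sum_{i=1}^nu_i-\beta\sqrt{D(u)}$, $\mathcal U^{\mathrm{eq}}_\beta=\arg\max_{u\in\mathcal U}F^{\mathrm{eq}}_\beta(u)$. *)

(* Defs.v *)
From HB Require Import structures.
From mathcomp Require Import all_boot all_order all_algebra.
From mathcomp Require Import all_classical all_reals all_analysis.
Set Implicit Arguments. Unset Strict Implicit. Unset Printing Implicit Defensive.
Import Order.TTheory GRing.Theory Num.Theory.
Local Open Scope ring_scope.

Section Reciprocal.
Variables (R : realType) (n : nat).

(* A reciprocal recommendation task: mutual preferences mu (used only for
   i <> j) and exposure weights v indexed by positions k in [n-1]. *)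
Definition valid_task (mu : 'I_n -> 'I_n -> R) (v : 'I_n.-1 -> R) : Prop :=
  (forall i j : 'I_n, i != j -> mu i j = mu j i) /\
  (forall i j : 'I_n, i != j -> 0 <= mu i j) /\
  (forall k l : 'I_n.-1, (k <= l)%N -> v l <= v k) /\
  (forall k : 'I_n.-1, 0 <= v k).

(* Ranking tensor: P i j k is defined for j <> i; for each i the matrix
   (P i j k)_{j <> i, k} is doubly stochastic.  Entries with j = i are unused. *)
Definition ranking_tensor (P : 'I_n -> 'I_n -> 'I_n.-1 -> R) : Prop :=
  forall i : 'I_n,
    (forall j k, j != i -> 0 <= P i j k) /\
    (forall j, j != i -> \sum_(k < n.-1) P i j k = 1) /\
    (forall k, \sum_(j < n | j != i) P i j k = 1).

Definition expo (P : 'I_n -> 'I_n -> 'I_n.-1 -> R) (v : 'I_n.-1 -> R) i j : R :=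
  \sum_(k < n.-1) P i j k * v k.

Definition utility mu v (P : 'I_n -> 'I_n -> 'I_n.-1 -> R) (i : 'I_n) : R :=
  \sum_(j < n | j != i) mu i j * expo P v i j
  + \sum_(j < n | j != i) mu i j * expo P v j i.

Definition in_U mu v (u : 'I_n -> R) : Prop :=
  exists P, ranking_tensor P /\ forall i, u i = utility mu v P i.

Definition psi (x alpha : R) : \bar R :=
  if 0 < alpha then (x `^ alpha)%:E
  else if 0 < x then
    (if alpha == 0 then (ln x)%:E else (- x `^ alpha)%:E)
  else -oo%E.

Definition W (alpha : R) (u : 'I_n -> R) : \bar R :=
  (\sum_(i < n) psi (u i) alpha)%E.

Definition W_maximizer mu v alpha (u : 'I_n -> R) : Prop :=
  in_U mu v u /\ forall u', in_U mu v u' -> (W alpha u' <= W alpha u)%E.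

Definition Dvar (u : 'I_n -> R) : R :=
  n%:R^-1 * \sum_(j < n) (u j - n%:R^-1 * \sum_(j' < n) u j') ^+ 2.

Definition Feq (beta : R) (u : 'I_n -> R) : R :=
  \sum_(i < n) u i - beta * Num.sqrt (Dvar u).

Definition in_Ueq mu v beta (u : 'I_n -> R) : Prop :=
  in_U mu v u /\ forall u', in_U mu v u' -> Feq beta u' <= Feq beta u.

End Reciprocal.

(* Main.v *)
From HB Require Import structures.
From mathcomp Require Import all_boot all_order all_algebra all_fingroup.
From mathcomp Require Import all_classical all_reals all_analysis.
Require Import Defs.
From mathcomp Require Import ring lra.
Import Order.TTheory GRing.Theory Num.Theory.
Import numFieldNormedType.Exports.
Local Open Scope classical_set_scope.
Local Open Scope ring_scope.

Section Gen.
Variables (R : realType) (n : nat).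

Lemma sum_ind (j : 'I_n) (c : R) : \sum_(i < n) (i == j)%:R * c = c.
Proof.
rewrite (bigD1 j) //= eqxx mul1r big1 ?addr0 // => i /negbTE ->; by rewrite mul0r.
Qed.

Definition ptens (g : 'I_n -> {perm 'I_n.-1}) : 'I_n -> 'I_n -> 'I_n.-1 -> R :=
  fun i j k => (j == lift i (g i k))%:R.

Lemma ptens_rank g : ranking_tensor (ptens g).
Proof.
move=> i; split; [|split].
- by move=> j k _; rewrite /ptens ler0n.
- move=> j ji; case: (unliftP i j) => [j' ->|Hj]; last by rewrite Hj eqxx in ji.
  rewrite /ptens.
  rewrite (eq_bigr (fun k => (g i k == j')%:R)); last first.
    by move=> k _; rewrite (inj_eq lift_inj) eq_sym.
  rewrite (reindex_inj (@perm_inj _ (g i)^-1)) /=.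
  rewrite (eq_bigr (fun k => (k == j')%:R)); last by move=> k _; rewrite permKV.
  by rewrite (bigD1 j') //= eqxx big1 ?addr0 // => k /negbTE ->.
- move=> k; rewrite /ptens (bigD1 (lift i (g i k))) /=; last by rewrite eq_sym neq_lift.
  rewrite eqxx big1 ?addr0 // => j /andP[_ /negbTE ->] //.
Qed.

Definition cmb (t : R) (P Q : 'I_n -> 'I_n -> 'I_n.-1 -> R) :=
  fun i j k => (1 - t) * P i j k + t * Q i j k.

Lemma cmb_rank t P Q : 0 <= t <= 1 -> ranking_tensor P -> ranking_tensor Q ->
  ranking_tensor (cmb t P Q).
Proof.
move=> /andP[t0 t1] HP HQ i; have [P1 [P2 P3]] := HP i; have [Q1 [Q2 Q3]] := HQ i.
split; [|split].
- move=> j k ji; rewrite /cmb addr_ge0 // mulr_ge0 ?subr_ge0 //; by [apply: P1| apply: Q1].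
- move=> j ji; rewrite /cmb big_split /= -!mulr_sumr P2 // Q2 //; ring.
- move=> k; rewrite /cmb big_split /= -!mulr_sumr P3 Q3; ring.
Qed.

Lemma cmb_util mu v t P Q i :
  utility mu v (cmb t P Q) i = (1 - t) * utility mu v P i + t * utility mu v Q i.
Proof.
have E : forall a b, expo (cmb t P Q) v a b = (1 - t) * expo P v a b + t * expo Q v a b.
  move=> a b; rewrite /expo /cmb !mulr_sumr -big_split /=; apply: eq_bigr => k _; ring.
rewrite /utility !mulrDr.
rewrite (eq_bigr (fun j => (1 - t) * (mu i j * expo P v i j) + t * (mu i j * expo Q v i j))); last by move=> j _; rewrite E; ring.
rewrite [X in _ + X](eq_bigr (fun j => (1 - t) * (mu i j * expo P v j i) + t * (mu i j * expo Q v j i))); last by move=> j _; rewrite E; ring.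
rewrite !big_split /= -!mulr_sumr; ring.
Qed.

Lemma in_U_cmb (mu : 'I_n -> 'I_n -> R) v t u w : 0 <= t <= 1 -> in_U mu v u -> in_U mu v w ->
  in_U mu v (fun i => (1 - t) * u i + t * w i).
Proof.
move=> ht [P [HP Hu]] [Q [HQ Hw]]; exists (cmb t P Q); split; first exact: cmb_rank.
by move=> i; rewrite cmb_util Hu Hw.
Qed.

End Gen.

Section Spec.
Variables (R : realType) (k : nat).
Local Notation N := (k.+4).+1.

Definition side (i : 'I_N) := (i < 2)%N.
Definition muS (i j : 'I_N) : R := (side i != side j)%:R.
Definition vS (x : 'I_N.-1) : R := ((x : nat) == 0%N)%:R.

Lemma valid_S : valid_task muS vS.
Proof.
split; [|split; [|split]].
- by move=> i j _; rewrite /muS eq_sym.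
- by move=> i j _; rewrite /muS ler0n.
- move=> x y; rewrite /vS; case: (y : nat) => [|y'] /=; last by rewrite ler0n.
  by rewrite leqn0 => /eqP ->.
- by move=> x; rewrite /vS ler0n.
Qed.

Lemma util_ge0 P i : ranking_tensor P -> 0 <= utility muS vS P i.
Proof.
move=> HP; rewrite /utility addr_ge0 // sumr_ge0 // => j ji; rewrite mulr_ge0 // ?/muS ?ler0n //;
  rewrite /expo sumr_ge0 // => x _; rewrite mulr_ge0 ?/vS ?ler0n //.
- by have [H _] := HP i; apply: H.
- by have [H _] := HP j; apply: H; rewrite eq_sym.
Qed.

Lemma in_U_ge0 u i : in_U muS vS u -> 0 <= u i.
Proof. by move=> [P [HP ->]]; apply: util_ge0. Qed.

Definition tg (g : 'I_N -> {perm 'I_N.-1}) (i : 'I_N) : 'I_N := lift i (g i ord0).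

Lemma expo_ptens g i j : expo (ptens R N g) vS i j = (j == tg g i)%:R.
Proof.
rewrite /expo (bigD1 ord0) //= /vS eqxx mulr1 big1 ?addr0 //.
move=> x /negbTE; rewrite -val_eqE /= => ->; by rewrite mulr0.
Qed.

Lemma util_ptens g i : utility muS vS (ptens R N g) i =
  \sum_(j < N | j != i) muS i j * (j == tg g i)%:R +
  \sum_(j < N | j != i) muS i j * (i == tg g j)%:R.
Proof.
rewrite /utility; congr (_ + _); apply: eq_bigr => j _; by rewrite expo_ptens.
Qed.


Definition two : 'I_N.-1 := @Ordinal k.+4 2 isT.
Definition one : 'I_N.-1 := @Ordinal k.+4 1 isT.
Definition g0 (i : 'I_N) : {perm 'I_N.-1} :=
  tperm ord0 (if (i < 2)%N then ord0 else two).
Definition g1 (i : 'I_N) : {perm 'I_N.-1} :=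
  tperm ord0 (if (i : nat) == 1%N then one else ord0).

Lemma tg0_side i : side (tg g0 i) = side i.
Proof.
rewrite /tg /g0 tpermL /side /=.
case: ifP => /= Hi; rewrite /bump; case: (i : nat) Hi => [|[|[|m]]] //=.
Qed.

Lemma zero_in_U : in_U muS vS (fun _ => 0).
Proof.
exists (ptens R N g0); split; first exact: ptens_rank.
move=> i; rewrite util_ptens.
rewrite !big1 ?addr0 // => j _.
- case: eqP => [->|]; last by rewrite mulr0.
  by rewrite /muS tg0_side eqxx mul0r.
- case: eqP => [->|]; last by rewrite mulr0.
  by rewrite /muS tg0_side eqxx mul0r.
Qed.


Lemma sum_ge_term (i : 'I_N) (F : 'I_N -> R) (j : 'I_N) : j != i ->
  (forall x, 0 <= F x) -> F j <= \sum_(x < N | x != i) F x.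
Proof. by move=> ji F0; rewrite (bigD1 j) //= lerDl sumr_ge0. Qed.

Lemma good_ge1 i : 1 <= utility muS vS (ptens R N g1) i.
Proof.
have F0 : forall (a b c : 'I_N), 0 <= muS a b * (c == tg g1 b)%:R.
  by move=> a b c; rewrite mulr_ge0 // /muS ler0n.
have G0 : forall (a b : 'I_N), 0 <= muS a b * (b == tg g1 a)%:R.
  by move=> a b; rewrite mulr_ge0 // /muS ler0n.
rewrite util_ptens.
case: (boolP ((i : nat) == 0%N)) => Hi.
- pose j2 : 'I_N := @Ordinal N 2 isT.
  have hA : 0 <= \sum_(j < N | j != i) muS i j * (j == tg g1 i)%:R by rewrite sumr_ge0.
  suff hB : 1 <= \sum_(j < N | j != i) muS i j * (i == tg g1 j)%:R by lra.
  apply: le_trans (@sum_ge_term i (fun j => muS i j * (i == tg g1 j)%:R) (j2) _ _) => //.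
  + have -> : i == tg g1 j2 by rewrite -val_eqE /tg /g1 tpermL /= (eqP Hi).
    by rewrite /muS /side (eqP Hi) /= mulr1.
  + by rewrite -val_eqE /= (eqP Hi).
- have hB : 0 <= \sum_(j < N | j != i) muS i j * (i == tg g1 j)%:R by rewrite sumr_ge0.
  suff hA : 1 <= \sum_(j < N | j != i) muS i j * (j == tg g1 i)%:R by lra.
  apply: le_trans (@sum_ge_term i (fun j => muS i j * (j == tg g1 i)%:R) (tg g1 i) _ _) => //.
  + rewrite eqxx mulr1 /muS /tg /g1 tpermL /side.
    move: Hi; case: ifP => /eqP; rewrite /= /bump; case: (i : nat) => [|[|[|m]]] //=.
  + by rewrite eq_sym neq_lift.
Qed.

Lemma good_in_U : in_U muS vS (utility muS vS (ptens R N g1)).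
Proof. by exists (ptens R N g1); split => //; apply: ptens_rank. Qed.


Lemma muS_sum i (F : 'I_N -> R) :
  \sum_(j < N | j != i) muS i j * F j = \sum_(j < N | side j != side i) F j.
Proof.
rewrite big_mkcond [RHS]big_mkcond; apply: eq_bigr => j _ /=.
case: (eqVneq j i) => [->|ji] /=; first by rewrite eqxx.
by rewrite /muS eq_sym; case: (side j != side i); rewrite ?mul1r ?mul0r.
Qed.

Lemma side_identity P :
  \sum_(i < N | side i) utility muS vS P i = \sum_(i < N | ~~ side i) utility muS vS P i.
Proof.
set e := expo P vS.
have E : forall i, utility muS vS P i = \sum_(j < N | side j != side i) (e i j + e j i).
  by move=> i; rewrite /utility !muS_sum big_split.
rewrite (eq_bigr (fun i => \sum_(j < N | ~~ side j) (e i j + e j i))); last first.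
  by move=> i Hi; rewrite E; apply: eq_bigl => j; rewrite Hi eqb_id.
rewrite [RHS](eq_bigr (fun i => \sum_(j < N | side j) (e i j + e j i))); last first.
  by move=> i /negbTE Hi; rewrite E; apply: eq_bigl => j; rewrite Hi eqbF_neg negbK.
rewrite [RHS]exchange_big /=; apply: eq_bigr => i _; apply: eq_bigr => j _; by rewrite addrC.
Qed.

Lemma side_sum (u : 'I_N -> R) :
  \sum_(i < N | side i) u i = u ord0 + u (lift ord0 ord0).
Proof.
rewrite big_mkcond !big_ord_recl /= big1 ?addr0 //.
Qed.

Lemma total_sum u : in_U muS vS u ->
  \sum_(i < N) u i = 2 * (u ord0 + u (lift ord0 ord0)) /\
  \sum_(i < N | ~~ side i) u i = u ord0 + u (lift ord0 ord0).
Proof.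
move=> [P [HP Hu]].
have Hs : \sum_(i < N | side i) u i = \sum_(i < N | ~~ side i) u i.
  rewrite (eq_bigr (fun i => utility muS vS P i)) //.
  rewrite [RHS](eq_bigr (fun i => utility muS vS P i)) //.
  exact: side_identity.
rewrite (bigID side) /= -Hs side_sum; split => //; ring.
Qed.


Lemma Feq0_zero beta u : in_U muS vS u -> 8 * (N%:R : R) ^+ 3 < beta ->
  0 <= Feq beta u -> forall i, u i = 0.
Proof.
move=> Hu Hb HF.
have [HS _] := @total_sum u Hu.
set a := u ord0 in HS *; set b := u (lift ord0 ord0) in HS *.
have a0 : 0 <= a by apply: in_U_ge0.
have b0 : 0 <= b by apply: in_U_ge0.
set Nr : R := N%:R.
have N5 : 5 <= Nr by rewrite /Nr ler_nat.
set S := \sum_(i < N) u i in HS.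
set m := Nr^-1 * S.
have hm : m * Nr = S by rewrite /m mulrAC mulVf ?mul1r // /Nr pnatr_eq0.
set X := \sum_(j < N) (u j - m) ^+ 2.
have HX : (a - m) ^+ 2 + (b - m) ^+ 2 <= X.
  rewrite /X big_ord_recl big_ord_recl /= -/a -/b addrA lerDl sumr_ge0 // => j _; exact: sqr_ge0.
have HD : Dvar u = Nr^-1 * X by [].
have X0 : 0 <= X by rewrite /X sumr_ge0 // => j _; exact: sqr_ge0.
have D0 : 0 <= Dvar u by rewrite HD mulr_ge0 // invr_ge0 /Nr ler0n.
set q := Num.sqrt (Dvar u).
have q0 : 0 <= q by apply: sqrtr_ge0.
have qq : q ^+ 2 = Nr^-1 * X by rewrite /q sqr_sqrtr.
have qX : Nr * q ^+ 2 = X by rewrite qq mulrA mulfV ?mul1r // /Nr pnatr_eq0.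
have hF : beta * q <= S by move: HF; rewrite /Feq -/S -/q subr_ge0.
have b1 : 1 <= beta by nra.
have hF2 : beta ^+ 2 * q ^+ 2 <= S ^+ 2.
  have bq : 0 <= beta * q by nra.
  nra.
have s0 : a + b = 0.
  have H1 : Nr ^+ 2 * X * beta ^+ 2 <= Nr ^+ 3 * S ^+ 2.
    rewrite -qX (_ : Nr ^+ 2 * (Nr * q ^+ 2) * beta ^+ 2 = Nr ^+ 3 * (beta ^+ 2 * q ^+ 2)); last by ring.
    by apply: ler_wpM2l => //; rewrite exprn_ge0 //; lra.
  have H2 : Nr * (a + b - 2 * m) >= a + b by nra.
  have H3 : (a + b - 2 * m) ^+ 2 <= 2 * X.
    have h := sqr_ge0 (a - b). nra.
  have H4 : (a + b) ^+ 2 <= 2 * Nr ^+ 2 * X by nra.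
  have H5 : (a + b) ^+ 2 * beta ^+ 2 <= 8 * Nr ^+ 3 * (a + b) ^+ 2.
    have b2 : 0 <= beta ^+ 2 by rewrite exprn_ge0 //; lra.
    have h5 := ler_wpM2r b2 H4.
    have e : S ^+ 2 = 4 * (a + b) ^+ 2 by rewrite HS; ring.
    rewrite e in H1; nra.
  have H6 : beta ^+ 2 > 8 * Nr ^+ 3 by nra.
  have hs2 : (a + b) ^+ 2 * (beta ^+ 2 - 8 * Nr ^+ 3) <= 0.
    rewrite mulrBr subr_le0; lra.
  have hp : 0 < beta ^+ 2 - 8 * Nr ^+ 3 by lra.
  rewrite pmulr_lle0 // in hs2.
  have : (a + b) ^+ 2 = 0 by apply/eqP; rewrite eq_le hs2 sqr_ge0.
  by move/eqP; rewrite sqrf_eq0 => /eqP.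
have S0 : S = 0 by rewrite HS s0 mulr0.
move=> i; move/eqP: S0; rewrite psumr_eq0 => [/allP /(_ i) H|j _]; last exact: in_U_ge0.
by apply/eqP; apply: H; rewrite mem_index_enum.
Qed.


Lemma W_pos alpha (u : 'I_N -> R) : 0 < alpha ->
  W alpha u = (\sum_(i < N) u i `^ alpha)%:E.
Proof. by move=> ha; rewrite /W -sumEFin; apply: eq_bigr => i _; rewrite /psi ha. Qed.

Lemma W_fin alpha (u : 'I_N -> R) : alpha <= 0 -> (forall i, 0 < u i) ->
  W alpha u = (\sum_(i < N) (if alpha == 0 then ln (u i) else - u i `^ alpha))%:E.
Proof.
move=> ha hu; rewrite /W -sumEFin; apply: eq_bigr => i _.
by rewrite /psi ltNge ha /= hu; case: ifP.
Qed.

Lemma W_ninf alpha (u : 'I_N -> R) z : alpha <= 0 -> u z <= 0 -> W alpha u = -oo%E.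
Proof.
move=> ha hz; rewrite /W (bigD1 z) //= {1}/psi ltNge ha /= ltNge hz /=.
exact: addNye.
Qed.


Lemma ua_pos alpha ua : alpha < 1 -> W_maximizer muS vS alpha ua -> forall i, 0 < ua i.
Proof.
move=> ha1 [HU Hmax] z.
set w := utility muS vS (ptens R N g1).
have w1 : forall i, 1 <= w i by move=> i; apply: good_ge1.
have hw := Hmax w good_in_U.
rewrite lt_neqAle (in_U_ge0 ua z HU) andbT eq_sym.
apply/negP => /eqP hz.
case: (leP alpha 0) => ha.
- move: hw; rewrite (W_ninf _ ua z ha) ?hz // (W_fin _ w ha); last by move=> i; apply: lt_le_trans (w1 i).
  by rewrite leeNy_eq.
- set S := \sum_(i < N) ua i `^ alpha.
  have S0 : 0 <= S by rewrite sumr_ge0 // => i _; apply: powR_ge0.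
  set c := (2 * (S + 1))^-1.
  have c0 : 0 < c by rewrite invr_gt0; lra.
  have cS : c * S < 1.
    rewrite /c mulrC ltr_pdivrMr; lra.
  have c1 : c <= 1 by rewrite /c invf_le1; lra.
  set t := c `^ (1 - alpha)^-1.
  have t0 : 0 < t by apply: powR_gt0.
  have e1 : 1 <= (1 - alpha)^-1 by rewrite invf_ge1; lra.
  have tc : t <= c by apply: ge1r_powR => //; rewrite c0 c1.
  have t1 : t < 1.
    suff : c < 1 by lra.
    rewrite /c invr_lt1 ?unitfE; lra.
  have tpow : t `^ (1 - alpha) = c.
    by rewrite /t -powRrM mulVf ?powRr1 //; [lra | apply: lt0r_neq0; lra].
  have tsplit : t = t `^ alpha * c.
    rewrite -tpow -powRD; last by rewrite addrC subrK oner_eq0.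
    by rewrite addrC subrK powRr1 //; lra.
  have ta0 : 0 < t `^ alpha by apply: powR_gt0.
  set ut := fun i => (1 - t) * ua i + t * w i.
  have Hut : in_U muS vS ut by apply: in_U_cmb => //; [lra | exact: good_in_U].
  have := Hmax ut Hut; rewrite !W_pos // lee_fin => Hle.
  have Hlow : (1 - t) * S + t `^ alpha <= \sum_(i < N) ut i `^ alpha.
    have -> : (1 - t) * S + t `^ alpha =
      \sum_(i < N) ((1 - t) * ua i `^ alpha + (i == z)%:R * t `^ alpha).
      by rewrite big_split /= -mulr_sumr sum_ind.
    apply: ler_sum => i _.
    have ui0 : 0 <= ua i by apply: in_U_ge0.
    have uti : (1 - t) * ua i <= ut i.
      rewrite /ut lerDl mulr_ge0 //; first lra; apply: le_trans (w1 i); lra.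
    have ut0 : 0 <= ut i by apply: le_trans uti; rewrite mulr_ge0 //; lra.
    case: (boolP (i == z)) => [/eqP Ei|iz].
    + rewrite Ei hz powR0; last by apply: lt0r_neq0.
      rewrite mulr0 add0r mul1r.
      apply: ge0_ler_powR; rewrite ?nnegrE //; try lra;
        rewrite /ut hz mulr0 add0r; have := w1 z; nra.
    + rewrite mul0r addr0.
      apply: le_trans (_ : ((1 - t) * ua i) `^ alpha <= _); last first.
        by apply: ge0_ler_powR; rewrite ?nnegrE //; [lra | rewrite mulr_ge0 //; lra].
      rewrite powRM //; last by lra.
      apply: ler_wpM2r; first exact: powR_ge0.
      apply: ger1_powR; last lra.
      by apply/andP; split; lra.
  move: Hlow Hle; rewrite mulrBl mul1r -/S => Hlow Hle.
  have : t `^ alpha <= t * S by lra.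
  rewrite {2}tsplit -mulrA; have := cS; nra.
Qed.

End Spec.

Theorem proposition3 (R : realType) (n : nat) (hn : (5 <= n)%N) :
  exists (mu : 'I_n -> 'I_n -> R) (v : 'I_n.-1 -> R),
    valid_task mu v /\
    forall (alpha : R), alpha < 1 ->
    forall (ua : 'I_n -> R), W_maximizer mu v alpha ua ->
    forall (ueq : R -> 'I_n -> R),
      (forall beta, 0 < beta -> in_Ueq mu v beta (ueq beta)) ->
      (exists beta, 0 < beta /\ forall i, ueq beta i < ua i) /\
      ((\sum_(i < n) ueq beta i) @[beta --> +oo] --> 0).
Proof.
case: n hn => [|[|[|[|[|k]]]]] // _.
exists (@muS R k), (@vS R k); split; first exact: valid_S.
move=> alpha ha ua Hua ueq Hueq.
have upos := @ua_pos R k alpha ua ha Hua.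
set B : R := 8 * (k.+4.+1)%:R ^+ 3 + 1.
have B0 : 0 < B by rewrite /B ltr_pwDr // mulr_ge0 // exprn_ge0.
have F0 : forall beta, Feq beta (fun _ : 'I_k.+4.+1 => 0 : R) = 0.
  move=> beta; rewrite /Feq /Dvar big1_eq sub0r.
  rewrite mulr0 subr0 expr0n /= big1_eq mulr0 sqrtr0 mulr0 oppr0 //.
have Z : forall beta, B <= beta -> forall i, ueq beta i = 0.
  move=> beta hb; have [HU Hmax] := Hueq beta (lt_le_trans B0 hb).
  apply: (@Feq0_zero R k beta _ HU); first by move: hb; rewrite /B; lra.
  by rewrite -(F0 beta); apply: Hmax; apply: (@zero_in_U R k).
split.
- exists B; split => // i; rewrite Z //; exact: upos.
- apply: cvg_near_cst; exists B; split; [exact: num_real | move=> x hx].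
  rewrite big1 // => i _; apply: Z; exact: ltW.
Qed.
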